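(* Let $m\ge3$ be odd, $s$ a positive integer, $n=sm$, and $\Gamma=C_n[mK_1]$. For $i\in\{2,\dots,n\}$ let $\ell_i=1+\frac{(i-2)(i-1)}{2}$, and let $\sigma_1=(c,1,\dots,1)r$, $\sigma_2=(t,tc^{\ell_2},tc^{\ell_3},\dots,tc^{\ell_n})z$ and $G=\langle\sigma_1,\sigma_2\rangle$. Then $\Gamma$ is the skeleton of a polytopal chiral map $\mathcal M$ of type $\{mn,2m\}$ with $\mathrm{Aut}(\mathcal M)=\mathrm{Aut}^+(\mathcal M)=G$.
   Context: $C_n[mK_1]$ is the graph with vertex set $\{1,\dots,n\}\times\{1,\dots,m\}$ in which $(i_1,j_1)$ is adjacent to $(i_2,j_2)$ if and only if $i_1\equiv i_2\pm1\pmod n$ (residues mod $n$ taken in $\{1,\dots,n\}$). Permutations act on the right ($x\alpha$ is the image of $x$) and products are composed left to right, both in $S_m$ and in $\mathrm{Aut}(\Gamma)$. For $\alpha_1,\dots,\alpha_n\in S_m$ and a permutation $x$ of $\{1,\dots,n\}$ in the dihedral group $D_n=\langle r,z\rangle$, $(\alpha_1,\dots,\alpha_n)x$ denotes the automorphism of $\Gamma$ mapping $(i,j)\mapsto(ix,\,j\alpha_i)$; $1$ denotes an identity permutation. Here $c=(1\,2\,\cdots\,m)\in S_m$; $t\in S_m$ fixes $1$ and maps $j\mapsto m-j+2$ for $2\le j\le m$; $r$ is the permutation $i\mapsto i+1 \pmod n$ of $\{1,\dots,n\}$; and $z$ fixes $1$ and maps $j\mapsto n-j+2$ for $2\le j\le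 n$. A map is a finite connected graph (its skeleton), viewed as a 1-dimensional CW complex, embedded in a closed surface so that every connected component of the complement (a face) is homeomorphic to an open disk. The map is polytopal if the boundary of each face is a cycle of the skeleton and every edge lies on the boundary of exactly two distinct faces. An automorphism of a map is an automorphism of the skeleton that extends to a homeomorphism of the surface; these form the group $\mathrm{Aut}(\mathcal M)$. A map is rotary if the stabiliser of each vertex contains a cyclic group acting transitively on the edges incident to it, and the stabiliser of each face contains a cyclic group acting transitively on the vertices (and edges) of the face; it has type $\{p,q\}$ if each face has $p$ edges on its boundary and the skeleton is $q$-valent. A rotary map is reflexible if the stabiliser of a face also contains an automorphism acting as a reflection of that face; a rotary map on an orientable surface that is not reflexible is chiral. For a polytopal rotary map and a flag (incident vertex–edge–face triple) $\Phi=(v,e,f)$, distinguished generators are automorphisms $\sigma_1,\sigma_2$ such that $\sigma_1$ preserves $f$ and acts as a one-step rotation of its boundary cycle, $\sigma_2$ fixes $v$ and acts as a one-step rotation of the edges around $v$, and $\sigma_1\sigma_2$ is an involution reversing $e$; the rotational group is $\mathrm{Aut}^+(\mathcal M)=\langle\sigma_1,\sigma_2\rangle$. *)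

(* Defs.v *)
From HB Require Import structures.
From mathcomp Require Import all_boot all_order all_algebra all_fingroup.
Set Implicit Arguments. Unset Strict Implicit. Unset Printing Implicit Defensive.
Import GRing.Theory.
Local Open Scope ring_scope.

(* Vertices of C_n[mK_1]: rows 'Z_n (paper row i  <->  i-1), columns 'Z_m
   (paper column j <-> j-1).  Only used for n, m >= 3. *)
Definition vtx (n m : nat) : finType := ('Z_n * 'Z_m)%type.

Definition adj n m : rel (vtx n m) :=
  fun x y => (y.1 == x.1 + 1) || (y.1 == x.1 - 1).

(* sigma1 = (c,1,...,1) r : (i,j) |-> (i+1, j + [i = first row]) *)
Definition sigma1_fun n m (x : vtx n m) : vtx n m :=
  (x.1 + 1, x.2 + (x.1 == 0)%:R).
Definition sigma1_inv n m (y : vtx n m) : vtx n m :=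
  (y.1 - 1, y.2 - (y.1 - 1 == 0)%:R).
Lemma sigma1_funK n m : cancel (@sigma1_fun n m) (@sigma1_inv n m).
Proof. by case=> i j; rewrite /sigma1_fun /sigma1_inv /= !addrK. Qed.
Definition sigma1 n m : {perm vtx n m} := perm (can_inj (@sigma1_funK n m)).

(* exponent of c in the row-(i+1) entry of sigma2: 0 for the first row
   (entry t), and l_{i+1} = 1 + (i-1)i/2 for 0-indexed row i >= 1 *)
Definition ell n m (i : 'Z_n) : 'Z_m :=
  if i == 0 then 0 else (1 + ((val i).-1 * val i) %/ 2)%N%:R.

(* sigma2 = (t, t c^{l_2}, ..., t c^{l_n}) z :
   (i,j) |-> (-i, -j + ell i)   (t : j |-> -j, c : j |-> j+1, z : i |-> -i) *)
Definition sigma2_fun n m (x : vtx n m) : vtx n m :=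
  (- x.1, - x.2 + ell m x.1).
Definition sigma2_inv n m (y : vtx n m) : vtx n m :=
  (- y.1, ell m (- y.1) - y.2).
Lemma sigma2_funK n m : cancel (@sigma2_fun n m) (@sigma2_inv n m).
Proof.
by case=> i j; rewrite /sigma2_fun /sigma2_inv /= opprK opprD opprK addrC addrNK.
Qed.
Definition sigma2 n m : {perm vtx n m} := perm (can_inj (@sigma2_funK n m)).

(* ---------- Maps on orientable surfaces, combinatorially ----------------
   An (orientable) map with skeleton Gamma is given by a rotation system:
   rot v w = the neighbour of v following w in the cyclic order around v. *)
Section Maps.
Variables (n m : nat).
Local Notation V := (vtx n m).
Implicit Types (rot : V -> V -> V) (d : V * V).

Definition dart d := adj d.1 d.2.

Definition is_rotation rot :=
  (forall v w, adj v w -> adj v (rot v w)) /\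
  (forall v w w', adj v w -> adj v w' -> exists k, iter k (rot v) w = w').

(* face-boundary successor of a dart: (u,v) |-> (v, rot v u);
   the faces are the orbits of darts under face_step *)
Definition face_step rot d : V * V := (d.2, rot d.2 d.1).

Definition in_face rot d : pred (V * V) := fconnect (face_step rot) d.

Definition face_edges rot d : {set {set V}} :=
  [set [set e.1; e.2] | e in in_face rot d].
Definition face_verts rot d : {set V} := [set e.1 | e in in_face rot d].

(* polytopal: every face boundary is a cycle (no repeated vertex, length
   >= 3), and every edge lies on two distinct faces *)
Definition polytopal rot :=
  (forall d, dart d ->
     (forall k, (iter k (face_step rot) d).1 = d.1 ->
                iter k (face_step rot) d = d)
     /\ (3 <= fingraph.order (face_step rot) d)%N) /\
  (forall d, dart d -> ~~ in_face rot d (d.2, d.1)).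

Definition map_type rot (p q : nat) :=
  (forall d, dart d -> fingraph.order (face_step rot) d = p) /\
  (forall v : V, #|[set w | adj v w]| = q).

(* map automorphism: skeleton automorphism permuting the faces, i.e.
   extending to a homeomorphism of the surface *)
Definition map_aut rot (a : {perm V}) :=
  (forall x y, adj (a x) (a y) = adj x y) /\
  (forall d, dart d -> exists2 d', dart d' &
       [set a @: (e : {set V}) | e in face_edges rot d] = face_edges rot d').

Definition face_stab rot d (a : {perm V}) :=
  [set a @: (e : {set V}) | e in face_edges rot d] = face_edges rot d.

Definition rotary rot :=
  (forall v : V, exists a, [/\ map_aut rot a, a v = v &
      forall w w', adj v w -> adj v w' -> exists k, (a ^+ k)%g w = w']) /\
  (forall d, dart d -> exists a, [/\ map_aut rot a, face_stab rot d a &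
      forall u w, u \in face_verts rot d -> w \in face_verts rot d ->
                  exists k, (a ^+ k)%g u = w]).

Definition face_reflection rot d (a : {perm V}) :=
  [/\ map_aut rot a, face_stab rot d a &
      forall e, in_face rot d e -> in_face rot d (a e.2, a e.1)].

Definition reflexible rot :=
  rotary rot /\ forall d, dart d -> exists a, face_reflection rot d a.

(* the surface is orientable by construction (rotation system) *)
Definition chiral rot := rotary rot /\ ~ reflexible rot.

(* distinguished generators for the flag (v, {v,w}, face of fd) *)
Definition distinguished rot (v w : V) (fd : V * V) (t1 t2 : {perm V}) :=
  [/\ adj v w, (fd = (v, w) \/ fd = (w, v)),
      [/\ map_aut rot t1, face_stab rot fd t1 &
          (forall e, in_face rot fd e -> t1 e.1 = e.2) \/
          (forall e, in_face rot fd e -> t1 e.2 = e.1)],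
      [/\ map_aut rot t2, t2 v = v &
          (forall u, adj v u -> t2 u = rot v u) \/
          (forall u, adj v u -> rot v (t2 u) = u)] &
      [/\ ((t1 * t2) ^+ 2 = 1)%g, (t1 * t2 != 1)%g, (t1 * t2)%g v = w & (t1 * t2)%g w = v]].

End Maps.

(* Main.v *)
Require Import Defs.
From mathcomp Require Import all_boot all_order all_algebra all_fingroup.
From mathcomp Require Import ring zify.
Set Implicit Arguments. Unset Strict Implicit. Unset Printing Implicit Defensive.
Import GRing.Theory.
Local Open Scope ring_scope.

Section Main.
Variables m s : nat.
Hypotheses (Hodd : odd m) (Hm3 : (3 <= m)%N) (Hs : (0 < s)%N).
Local Notation n := (s * m)%N.
Local Notation N := (m * (s * m))%N.
Local Notation R := 'Z_N.
Local Notation V := (vtx n m).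

Lemma n_ge3 : (3 <= n)%N. Proof. by rewrite -[3%N]mul1n leq_mul. Qed.
Lemma n_gt1 : (1 < n)%N. Proof. by apply: leq_trans n_ge3. Qed.
Lemma m_gt1 : (1 < m)%N. Proof. by apply: leq_trans Hm3. Qed.
Lemma N_gt1 : (1 < N)%N. Proof. by apply: (leq_trans n_gt1); rewrite leq_pmull // ltnW // m_gt1. Qed.
Lemma n3N : (3 * n <= N)%N. Proof. by rewrite leq_mul2r Hm3 orbT. Qed.

Lemma natR0 k : (N %| k)%N -> (k%:R : R) = 0.
Proof. by move=> h; apply: val_inj; rewrite /= val_Zp_nat ?N_gt1 //; apply/eqP. Qed.

Lemma natR_inj a b : (a < N)%N -> (b < N)%N -> (a%:R : R) = b%:R -> a = b.
Proof.
move=> ha hb /(congr1 val); rewrite /= !val_Zp_nat ?N_gt1 //.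
by rewrite !modn_small.
Qed.

Lemma valK (x : R) : ((nat_of_ord x)%:R : R) = x.
Proof.
apply: val_inj; rewrite /= val_Zp_nat ?N_gt1 // modn_small //.
by case: x => k /=; rewrite Zp_cast ?N_gt1.
Qed.

Lemma val_ltN (x : R) : (nat_of_ord x < N)%N.
Proof. by case: x => k /=; rewrite Zp_cast ?N_gt1. Qed.

Definition nR : R := locked (n%:R).
Definition cR : R := locked ((n * m.+1./2)%:R).
Lemma nRE : nR = n%:R. Proof. by rewrite /nR -lock. Qed.
Lemma cRE : cR = (n * m.+1./2)%:R. Proof. by rewrite /cR -lock. Qed.

Lemma nn0 : nR * nR = 0.
Proof. by rewrite nRE -natrM natR0 //; apply/dvdnP; exists s; lia. Qed.
Lemma nm0 : nR * m%:R = 0.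
Proof. by rewrite nRE -natrM natR0 //; apply/dvdnP; exists 1%N; lia. Qed.
Lemma cn0 : cR * nR = 0.
Proof. by rewrite cRE nRE -natrM natR0 //; apply/dvdnP; exists (s * m.+1./2)%N; lia. Qed.
Lemma c2 : cR + cR = nR.
Proof.
rewrite cRE nRE -natrD -mulnDr addnn.
have := odd_double_half m.+1; rewrite /= Hodd /= add0n => ->.
by rewrite mulnS natrD [X in _ + X]natR0 ?addr0 //; apply/dvdnP; exists 1%N; lia.
Qed.
Lemma cc0 : cR * cR = 0.
Proof. by rewrite cRE -natrM natR0 //; apply/dvdnP; exists (s * m.+1./2 * m.+1./2)%N; lia. Qed.

Definition pi (x : R) : 'Z_n := (nat_of_ord x)%:R.

Lemma modZn k : (k%:R : 'Z_n) = (k %% n)%:R.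
Proof. by apply: val_inj; rewrite /= !val_Zp_nat ?n_gt1 // modn_mod. Qed.

Lemma piN k : pi (k%:R) = k%:R.
Proof.
rewrite /pi /= val_Zp_nat ?N_gt1 // modZn [RHS]modZn; congr (_%:R).
by rewrite modn_dvdm // dvdn_mull.
Qed.

Lemma piD x y : pi (x + y) = pi x + pi y.
Proof. by rewrite -[x]valK -[y]valK -natrD !piN natrD. Qed.
Lemma piM x y : pi (x * y) = pi x * pi y.
Proof. by rewrite -[x]valK -[y]valK -natrM !piN natrM. Qed.
Lemma pi0 : pi 0 = 0. Proof. by rewrite -[0]/(0%:R) piN. Qed.
Lemma pi1 : pi 1 = 1. Proof. by rewrite -[1]/(1%:R) piN. Qed.
Lemma piNeg x : pi (- x) = - pi x.
Proof. by apply/eqP; rewrite -subr_eq0 opprK -piD addNr pi0. Qed.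
Lemma piB x y : pi (x - y) = pi x - pi y.
Proof. by rewrite piD piNeg. Qed.
Lemma pin : pi nR = 0.
Proof. by rewrite nRE piN; apply: val_inj; rewrite /= val_Zp_nat ?n_gt1 // modnn. Qed.
Lemma pic : pi cR = 0.
Proof. by rewrite cRE piN natrM -(piN n) -nRE pin mul0r. Qed.

Lemma piker x : pi x = 0 -> exists t, x = nR * t.
Proof.
move=> /(congr1 val); rewrite /= val_Zp_nat ?n_gt1 // => /eqP h.
exists ((nat_of_ord x %/ n)%:R); rewrite nRE -natrM; apply: (etrans (esym (valK x))); congr (_%:R).
by rewrite {1}(divn_eq (nat_of_ord x) n) (eqP h) addn0 mulnC.
Qed.

Lemma Zn_1N1 : (1 : 'Z_n) != -1.
Proof.
apply/eqP => h; have : (2%:R : 'Z_n) = 0 by rewrite mulr2n {1}h addNr.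
by move/(congr1 (@nat_of_ord _)); rewrite val_Zp_nat ?n_gt1 // modn_small // n_ge3.
Qed.


Definition L (z : 'Z_n) : R := (nat_of_ord z)%:R.
Definition Lm (z : 'Z_m) : R := nR * (nat_of_ord z)%:R.
Definition psi (v : V) : R := L v.1 + Lm v.2 - nR * (v.1 != 0)%:R.
Definition phi (x : R) : V := ((nat_of_ord x)%:R, ((nat_of_ord x %/ n + (nat_of_ord x %% n != 0))%N)%:R).
Arguments phi : simpl never.

Lemma valZn k : nat_of_ord (k%:R : 'Z_n) = (k %% n)%N.
Proof. by rewrite val_Zp_nat ?n_gt1. Qed.
Lemma valZm k : nat_of_ord (k%:R : 'Z_m) = (k %% m)%N.
Proof. by rewrite val_Zp_nat ?m_gt1. Qed.

Lemma Lm_nat k : Lm (k%:R) = nR * k%:R.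
Proof.
rewrite /Lm valZm {2}(divn_eq k m) natrD natrM.
have h := nm0; ring: h.
Qed.

Lemma ZmK (z : 'Z_m) : ((nat_of_ord z)%:R : 'Z_m) = z. Proof. exact: natr_Zp. Qed.
Lemma ZnK (z : 'Z_n) : ((nat_of_ord z)%:R : 'Z_n) = z. Proof. exact: natr_Zp. Qed.

Lemma LmD a b : Lm (a + b) = Lm a + Lm b.
Proof. by rewrite -[a]ZmK -[b]ZmK -natrD !Lm_nat natrD mulrDr. Qed.
Lemma Lm0 : Lm 0 = 0. Proof. by rewrite /Lm mulr0. Qed.
Lemma LmN a : Lm (- a) = - Lm a.
Proof. by apply/eqP; rewrite -subr_eq0 opprK -LmD addNr Lm0. Qed.

Lemma Zn_eq0 k : ((k%:R : 'Z_n) == 0) = (k %% n == 0)%N.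
Proof. by apply/eqP/eqP => [/(congr1 (@nat_of_ord _))|h]; rewrite ?valZn //; apply: val_inj; rewrite /= valZn. Qed.

Lemma psiK x : psi (phi x) = x.
Proof.
rewrite /psi /phi /= /L valZn Zn_eq0 Lm_nat.
set k := nat_of_ord x; set b := (k %% n != 0)%N.
rewrite natrD mulrDr addrA addrK nRE -natrM -natrD.
by rewrite [(n * _)%N]mulnC addnC -divn_eq valK.
Qed.

Lemma phi_inj : injective phi. Proof. exact: can_inj psiK. Qed.

Lemma cardV : #|V| = N.
Proof.
rewrite /vtx card_prod !card_ord !Zp_cast ?n_gt1 ?m_gt1 //; lia.
Qed.
Lemma cardR : #|R| = N.
Proof. by rewrite card_ord Zp_cast ?N_gt1. Qed.

Lemma phiI x y : phi x = phi y -> x = y. Proof. exact: phi_inj. Qed.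

Lemma phi_bij : bijective phi.
Proof. by apply: (inj_card_bij phi_inj); rewrite cardV cardR. Qed.

Lemma phiK v : phi (psi v) = v.
Proof.
have [g g1 g2] := phi_bij.
by rewrite -[v]g2 psiK.
Qed.

Lemma phi_surj v : exists x, v = phi x.
Proof. by exists (psi v); rewrite phiK. Qed.

Lemma phi1 x : (phi x).1 = pi x. Proof. by []. Qed.

Definition isnb (d : R) := (pi d == 1) || (pi d == -1).

Lemma adjE x y : adj (phi x) (phi y) = isnb (y - x).
Proof.
by rewrite /adj !phi1 /isnb piB !subr_eq [1 + _]addrC [-1 + _]addrC.
Qed.


Lemma Zn_lt (z : 'Z_n) : (nat_of_ord z < n)%N.
Proof. by case: z => k /=; rewrite Zp_cast ?n_gt1. Qed.

Lemma L_add1 i : L (i + 1) = L i + 1 - nR * (i + 1 == 0)%:R.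
Proof.
rewrite /L; set r := nat_of_ord i.
have -> : i + 1 = (r.+1)%:R by rewrite -natr1 /r ZnK.
rewrite valZn Zn_eq0 nRE.
have := Zn_lt i; rewrite -/r leq_eqVlt => /orP [/eqP e| lt].
  by rewrite e modnn /= mulr1 natr1 e subrr.
by rewrite modn_small //= mulr0 subr0 natr1.
Qed.

Lemma Zn_nz (i : 'Z_n) : i != 0 -> (0 < nat_of_ord i)%N.
Proof. by move=> nz; rewrite lt0n; apply: contra nz => /eqP h; apply/eqP; apply: val_inj. Qed.

Lemma L0 : L 0 = 0. Proof. by rewrite /L. Qed.

Lemma L_neg i : L (- i) = nR * (i != 0)%:R - L i.
Proof.
have [->|nz] := eqVneq i 0; first by rewrite oppr0 L0 /= mulr0 subr0.
rewrite /= mulr1 /L; set r := nat_of_ord i.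
have rpos : (0 < r)%N by apply: Zn_nz.
have rle : (r <= n)%N by apply: ltnW; apply: Zn_lt.
have -> : - i = (n - r)%:R.
  apply/eqP; rewrite eq_sym -subr_eq0 opprK -[i]ZnK -/r -natrD subnK //.
  by rewrite Zn_eq0 modnn.
rewrite valZn modn_small ?natrB ?nRE //.
by rewrite -subn_gt0 subKn // ?rpos // ltnW.
Qed.

Definition sig1 := sigma1 n m.
Definition sig2 := sigma2 n m.

Lemma psi_sig1 v : psi (sig1 v) = psi v + 1.
Proof.
case: v => i j; rewrite /sig1 /sigma1 permE /sigma1_fun /psi /=.
rewrite L_add1 LmD [Lm ((_ == _)%:R)]Lm_nat.
by case: (i + 1 == 0); case: (i == 0) => /=; ring.
Qed.

Lemma Lell i : Lm (ell m i) = nR * (i != 0)%:R + cR * L i * (L i - 1).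
Proof.
rewrite /ell; have [->|nz] := eqVneq i 0.
  by rewrite /= Lm0 L0; ring.
rewrite /= Lm_nat /L.
have := Zn_nz nz.
case: (nat_of_ord i) => // r' _ /=.
set T := ((r' * r'.+1) %/ 2)%N.
have ev : (r' * r'.+1 = T * 2)%N.
  rewrite /T divn2 muln2; have h := odd_double_half (r' * r'.+1).
  by rewrite oddM /= andbN add0n in h; rewrite h.
have key : (cR * (r'.+1)%:R * (r')%:R : R) = nR * T%:R.
  rewrite cRE nRE -!natrM.
  have -> : (n * m.+1./2 * r'.+1 * r' = n * T + N * T)%N.
    have h2 := odd_double_half m.+1; rewrite /= Hodd /= add0n in h2.
    rewrite -mulnA [(r'.+1 * r')%N]mulnC ev.
    have -> : (n * m.+1./2 * (T * 2) = n * T * (m.+1./2).*2)%N by rewrite -muln2; lia.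
    rewrite h2; lia.
  by rewrite natrD [X in _ + X]natR0 ?addr0 // dvdn_mulr.
rewrite natrD mulrDr mulr1 -key -natr1 addrK; ring.
Qed.

Lemma psi_sig2 v : psi (sig2 v) = - psi v + cR * psi v * (psi v - 1).
Proof.
case: v => i j; rewrite /sig2 /sigma2 permE /sigma2_fun /psi /=.
rewrite L_neg LmD LmN Lell oppr_eq0 /Lm.
have h := cn0; have h2 := nn0.
by case: (i == 0) => /=; ring: h h2.
Qed.

Lemma sig1E x : sig1 (phi x) = phi (x + 1).
Proof. by rewrite -[sig1 _]phiK psi_sig1 psiK. Qed.
Lemma sig2E x : sig2 (phi x) = phi (- x + cR * x * (x - 1)).
Proof. by rewrite -[sig2 _]phiK psi_sig2 psiK. Qed.


Implicit Types (v w : V).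
Lemma pinM y : pi (nR * y) = 0. Proof. by rewrite piM pin mul0r. Qed.
Lemma picM y : pi (cR * y) = 0. Proof. by rewrite piM pic mul0r. Qed.
Lemma pi_1n t : pi (1 + nR * t) = 1. Proof. by rewrite piD pinM pi1 addr0. Qed.
Lemma pi_N1n t : pi (-1 + nR * t) = -1. Proof. by rewrite piD pinM piNeg pi1 addr0. Qed.
Lemma Zn_N11 : (-1 : 'Z_n) != 1. Proof. by rewrite eq_sym Zn_1N1. Qed.

Lemma nbP d : isnb d ->
  (exists2 t : R, d = 1 + nR * t & pi d = 1) \/ (exists2 t : R, d = -1 + nR * t & pi d = -1).
Proof.
case/orP => /eqP h; [left | right]; last first.
  have [t ht] : exists t, d + 1 = nR * t by apply: piker; rewrite piD h pi1 addNr.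
  by exists t => //; rewrite -ht addrC addrK.
have [t ht] : exists t, d - 1 = nR * t by apply: piker; rewrite piB h pi1 subrr.
by exists t => //; rewrite -ht addrC subrK.
Qed.

Definition rho (d : R) : R := - d + (if pi d == 1 then 0 else nR).
Lemma rho_pos d : pi d = 1 -> rho d = - d.
Proof. by rewrite /rho => ->; rewrite eqxx addr0. Qed.
Lemma rho_neg d : pi d = -1 -> rho d = - d + nR.
Proof. by rewrite /rho => ->; rewrite (negbTE Zn_N11). Qed.
Lemma pi_rho d : pi (rho d) = - pi d.
Proof. by rewrite /rho piD piNeg; case: ifP; rewrite ?pi0 ?pin addr0. Qed.

Lemma isnbN d d' : pi d' = - pi d -> isnb d' = isnb d.
Proof.
move=> h; rewrite /isnb h.
by rewrite !eqr_oppLR opprK orbC.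
Qed.

Definition rot (v w : V) : V := phi (psi v + rho (psi w - psi v)).
Arguments rot : simpl never.
Lemma rotE x y : rot (phi x) (phi y) = phi (x + rho (y - x)).
Proof. by rewrite /rot !psiK. Qed.

Lemma adj_sym v w : adj v w = adj w v.
Proof.
have [x ->] := phi_surj v; have [y ->] := phi_surj w.
by rewrite !adjE; apply: isnbN; rewrite !piB opprB.
Qed.

Lemma adj_rot v w : adj v w -> adj v (rot v w).
Proof.
have [x ->] := phi_surj v; have [y ->] := phi_surj w.
by rewrite rotE !adjE [x + _]addrC addrK (isnbN (pi_rho _)).
Qed.

Lemma pi_u k d : pi ((1 + nR * k) * d) = pi d.
Proof. by rewrite piM pi_1n mul1r. Qed.

Lemma rho2 d : isnb d -> rho (rho d) = (1 + nR) * d.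
Proof.
move=> hd; have hn := nn0; case: (nbP hd) => -[t -> p].
  by rewrite (rho_pos p) rho_neg; [ring: hn | rewrite piNeg p].
by rewrite (rho_neg p) rho_pos; [ring: hn | rewrite piD piNeg p opprK pin addr0].
Qed.

Lemma iter_rho_even d k : isnb d -> iter k.*2 rho d = (1 + nR * k%:R) * d.
Proof.
move=> hd; elim: k => [|k IH]; first by rewrite /= mulr0 addr0 mul1r.
have hn := nn0.
rewrite doubleS /= IH rho2; last by rewrite /isnb pi_u.
rewrite -natr1; ring: hn.
Qed.

Lemma rho_trans d d' : isnb d -> isnb d' -> exists k, iter k rho d = d'.
Proof.
move=> hd hd'; have hn := nn0.
case: (nbP hd) => -[t -> p]; case: (nbP hd') => -[t' -> p'].
- exists (nat_of_ord (t' - t)).*2; rewrite iter_rho_even ?valK; last by rewrite /isnb pi_1n eqxx.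
  ring: hn.
- exists (nat_of_ord (- t - t')).*2.+1; rewrite iterS iter_rho_even ?valK; last by rewrite /isnb pi_1n eqxx.
  rewrite rho_pos; last by rewrite pi_u pi_1n.
  ring: hn.
- exists (nat_of_ord (t' + t - 1)).*2.+1; rewrite iterS iter_rho_even ?valK; last by rewrite /isnb pi_N1n eqxx orbT.
  rewrite rho_neg; last by rewrite pi_u pi_N1n.
  ring: hn.
- exists (nat_of_ord (t - t')).*2; rewrite iter_rho_even ?valK; last by rewrite /isnb pi_N1n eqxx orbT.
  ring: hn.
Qed.

Lemma iter_rot x d k : iter k (rot (phi x)) (phi (x + d)) = phi (x + iter k rho d).
Proof.
elim: k => [|k IH] //=; by rewrite IH rotE addrAC subrr add0r.
Qed.

Lemma is_rot : is_rotation rot.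
Proof.
split; first exact: adj_rot.
move=> v w w'; have [x ->] := phi_surj v; have [y ->] := phi_surj w; have [z ->] := phi_surj w'.
rewrite !adjE => h1 h2; have [k hk] := rho_trans h1 h2.
by exists k; rewrite -{1}[y](subrK x) [_ + x]addrC iter_rot hk addrC subrK.
Qed.


Definition F (u d a : R) : R := u + a * d + (if pi d == 1 then cR * a * (a - 1) else 0).

Lemma F0 (u : R) (d : R) : F u d 0 = u.
Proof. by rewrite /F; case: ifP => _; ring. Qed.
Lemma F1 (u : R) (d : R) : F u d 1 = u + d.
Proof. by rewrite /F; case: ifP => _; ring. Qed.

Lemma stepE x y : face_step rot (phi x, phi y) = (phi y, phi (y + rho (x - y))).
Proof. by rewrite /face_step rotE. Qed.

Lemma F_succ (u : R) (d : R) (a : R) : isnb d ->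
  F u d (a + 1) + rho (F u d a - F u d (a + 1)) = F u d (a + 1 + 1).
Proof.
move=> hd; have h2 := esym c2; have hn := nn0.
case: (nbP hd) => -[t -> p]; rewrite /F p ?eqxx ?(negbTE Zn_N11).
  have -> : u + a * (1 + nR * t) + cR * a * (a - 1) -
      (u + (a + 1) * (1 + nR * t) + cR * (a + 1) * (a + 1 - 1)) = - ((1 + nR * t) + nR * a) by ring: h2.
  rewrite rho_neg; first by ring: h2.
  by rewrite piNeg piD pinM p addr0.
have -> : u + a * (-1 + nR * t) + 0 - (u + (a + 1) * (-1 + nR * t) + 0) = - (-1 + nR * t) by ring.
rewrite rho_pos; first by ring.
by rewrite piNeg p opprK.
Qed.

Lemma face_iter (u : R) (d : R) (k : nat) : isnb d ->
  iter k (face_step rot) (phi u, phi (u + d)) = (phi (F u d k%:R), phi (F u d (k%:R + 1))).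
Proof.
move=> hd; elim: k => [|k IH]; first by rewrite /= add0r F0 F1.
by rewrite iterS IH stepE F_succ // -natr1.
Qed.

Lemma piF (u : R) (d : R) (a : R) : isnb d -> pi (F u d a) = pi u + pi a * pi d.
Proof. by move=> _; rewrite /F piD piD piM; case: ifP => _; rewrite ?pi0 ?picM -?mulrA ?picM addr0. Qed.

Lemma F_inj (u : R) (d : R) (a : R) (b : R) : isnb d -> F u d a = F u d b -> a = b.
Proof.
move=> hd h; have hn := nn0; have hc := cn0.
have pd2 : pi d * pi d = 1.
  by case/orP: hd => /eqP ->; rewrite ?mulr1 // mulrNN mulr1.
have pab : pi (a - b) = 0.
  have := congr1 pi h; rewrite !piF // => /addrI e.
  by rewrite piB -[pi a]mulr1 -[pi b]mulr1 -pd2 !mulrA e subrr.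
have [w hw] := piker pab.
have ea : a = b + nR * w by rewrite -hw addrC subrK.
have key : F u d (b + nR * w) = F u d b + nR * w * d.
  rewrite /F; case: ifP => _; ring: hn hc.
move: h; rewrite ea key => /eqP; rewrite -subr_eq0 addrC addKr => /eqP e0.
have -> : nR * w = nR * w * d * d.
  case: (nbP hd) => -[t -> _]; ring: hn.
by rewrite e0 mul0r addr0.
Qed.

Lemma dart_form (d : V * V) : dart d -> exists u dd, isnb dd /\ d = (phi u, phi (u + dd)).
Proof.
case: d => v w; have [x ->] := phi_surj v; have [y ->] := phi_surj w.
rewrite /dart /= adjE => h; exists x, (y - x); split => //.
by rewrite addrC subrK.
Qed.

Lemma natR_mod k : (((k %% N)%N)%:R : R) = k%:R.
Proof.
by rewrite {2}(divn_eq k N) natrD natrM [X in _ * X]natR0 ?mulr0 ?add0r.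
Qed.

Lemma order_N (d : V * V) : dart d -> fingraph.order (face_step rot) d = N.
Proof.
move=> hd; have [u [dd [hdd ->]]] := dart_form hd.
set f := face_step rot; set d0 := (phi u, phi (u + dd)).
pose g (i : 'I_N) := iter i f d0.
have ginj : injective g.
  move=> i j; rewrite /g !face_iter // => h; move: (congr1 fst h) => /= /phiI /(F_inj hdd) e.
  apply: val_inj; apply: natR_inj; rewrite ?ltn_ord //; exact: e.
have N0 : (0 < N)%N by apply: ltnW; apply: N_gt1.
rewrite /fingraph.order -[RHS](card_ord N) -(card_codom ginj).
apply: eq_card => y; apply/idP/codomP.
  move=> /iter_findex <-; exists (Ordinal (ltn_pmod (findex f d0 y) N0)).
  by rewrite /g !face_iter //= natR_mod.
by case=> i ->; apply: fconnect_iter.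
Qed.

Definition dclass (e : V * V) := pi (psi e.2 - psi e.1).

Lemma dclass_step e : dclass (face_step rot e) = dclass e.
Proof.
case: e => a b; rewrite /dclass /face_step /rot /= psiK [psi b + _]addrC addrK pi_rho.
by rewrite !piB opprB.
Qed.

Lemma dclass_face d e : in_face rot d e -> dclass e = dclass d.
Proof.
move=> h; apply/esym; apply: (fconnect_invariant _ h) => x.
by rewrite /invariant inE /= dclass_step eqxx.
Qed.

Lemma polytopal_rot : polytopal rot.
Proof.
split.
  move=> d hd; split; last by rewrite order_N //; have := n3N; have := n_ge3; lia.
  move=> k; have [u [dd [hdd ->]]] := dart_form hd.
  rewrite face_iter //= => /phiI; rewrite -{2}(F0 u dd) => /F_inj -/(_ hdd) ->.
  by rewrite add0r F0 F1.
move=> d hd; apply/negP => /dclass_face; have [u [dd [hdd ->]]] := dart_form hd.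
rewrite /dclass /= !psiK.
have -> : u - (u + dd) = - dd by ring.
have -> : u + dd - u = dd by ring.
rewrite piNeg.
by case/orP: hdd => /eqP ->; rewrite ?opprK => /eqP; rewrite ?(negbTE Zn_1N1) ?(negbTE Zn_N11).
Qed.

Lemma map_type_rot : map_type rot N (2 * m).
Proof.
split; first exact: order_N.
move=> v; have -> : [set w | adj v w] = setX [set v.1 + 1; v.1 - 1] [set: 'Z_m].
  by apply/setP => -[i j]; rewrite !inE /adj /= andbT.
have cm : #|'Z_m| = m by rewrite card_ord Zp_cast ?m_gt1.
rewrite cardsX cards2 cardsT cm.
by rewrite (inj_eq (addrI _)) Zn_1N1.
Qed.


Definition compat (a : {perm V}) :=
  (forall x y, adj (a x) (a y) = adj x y) /\
  (forall v w, adj v w -> a (rot v w) = rot (a v) (a w)).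

Definition amap (a : {perm V}) (e : V * V) := (a e.1, a e.2).

Lemma compat1 : compat 1.
Proof. by split => *; rewrite !perm1. Qed.

Lemma compatM a b : compat a -> compat b -> compat (a * b).
Proof.
move=> [a1 a2] [b1 b2]; split => *; rewrite !permM ?b1 ?a1 //.
by rewrite a2 // b2 // a1.
Qed.

Lemma compat_sig1 : compat sig1.
Proof.
split.
  move=> v w; have [x ->] := phi_surj v; have [y ->] := phi_surj w.
  by rewrite !sig1E !adjE; congr isnb; ring.
move=> v w _; have [x ->] := phi_surj v; have [y ->] := phi_surj w.
rewrite rotE !sig1E rotE; congr phi.
have -> : y + 1 - (x + 1) = y - x by ring.
ring.
Qed.

Lemma compat_sig2 : compat sig2.
Proof.
have hn := nn0; have hc := cn0; have h2 := esym c2; have hcc := cc0.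
split.
  move=> v w; have [x ->] := phi_surj v; have [y ->] := phi_surj w.
  rewrite !sig2E !adjE; apply: isnbN.
  have pc : forall y z, pi (cR * y * z) = 0 by move=> ? ?; rewrite -mulrA picM.
  by rewrite !piB !piD !piNeg !pc !addr0; ring.
move=> v w; have [x ->] := phi_surj v; have [y ->] := phi_surj w.
have [d ->] : exists d, y = x + d by exists (y - x); rewrite addrC subrK.
have e : x + d - x = d by ring.
rewrite adjE e rotE e !sig2E rotE => hd; congr phi.
case: (nbP hd) => -[t -> p].
  rewrite rho_pos //.
  have -> : - (x + (1 + nR * t)) + cR * (x + (1 + nR * t)) * (x + (1 + nR * t) - 1) -
      (- x + cR * x * (x - 1)) = -1 + nR * (x - t) by ring: hn hc h2 hcc.
  rewrite rho_neg ?pi_N1n //.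
  ring: hn hc h2 hcc.
rewrite rho_neg //.
have -> : - (x + (-1 + nR * t)) + cR * (x + (-1 + nR * t)) * (x + (-1 + nR * t) - 1) -
    (- x + cR * x * (x - 1)) = 1 + nR * (1 - x - t) by ring: hn hc h2 hcc.
rewrite rho_pos ?pi_1n //.
ring: hn hc h2 hcc.
Qed.

Definition G := <<[set sig1; sig2]>>%g.

Lemma compatG a : a \in G -> compat a.
Proof.
case/gen_prodgP => k [c hc ->].
apply: (big_ind compat compat1 compatM) => i _.
by have := hc i; rewrite !inE => /orP[] /eqP ->; [exact: compat_sig1 | exact: compat_sig2].
Qed.

Lemma dart_step d : dart d -> dart (face_step rot d).
Proof. by case: d => u v; rewrite /dart /face_step /= => h; apply: adj_rot; rewrite adj_sym. Qed.

Lemma dart_iter d k : dart d -> dart (iter k (face_step rot) d).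
Proof. by move=> h; elim: k => //= k IH; apply: dart_step. Qed.

Lemma compat_step a e : compat a -> dart e -> amap a (face_step rot e) = face_step rot (amap a e).
Proof.
case=> _ a2; case: e => u v; rewrite /dart /amap /face_step /= => h.
by rewrite a2 // adj_sym.
Qed.

Lemma compat_iter a d k : compat a -> dart d ->
  amap a (iter k (face_step rot) d) = iter k (face_step rot) (amap a d).
Proof.
move=> ha hd; elim: k => //= k IH.
by rewrite compat_step ?IH //; apply: dart_iter.
Qed.

Lemma in_face_ex d e : in_face rot d e -> exists k, e = iter k (face_step rot) d.
Proof. by move=> h; exists (findex (face_step rot) d e); rewrite iter_findex. Qed.

Lemma in_face_iter d k : in_face rot d (iter k (face_step rot) d).
Proof. exact: fconnect_iter. Qed.

Lemma rho_inj : injective rho.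
Proof.
move=> a b h; have := congr1 pi h; rewrite !pi_rho => /oppr_inj e.
by move: h; rewrite /rho e => /addIr /oppr_inj.
Qed.

Lemma psi_inj : injective psi.
Proof. exact: can_inj phiK. Qed.

Lemma step_inj : injective (face_step rot).
Proof.
move=> [u v] [u' v'] h.
have ev : v = v' := congr1 fst h.
have e2 : rot v u = rot v' u' := congr1 snd h.
move: e2; rewrite -ev /rot => /phiI /addrI /rho_inj /addIr /psi_inj ->.
by rewrite ev.
Qed.

Lemma same_face d e : in_face rot d e -> in_face rot e =1 in_face rot d.
Proof.
move=> h y; apply/idP/idP => hy.
  exact: connect_trans h hy.
apply: connect_trans hy; by rewrite /in_face fconnect_sym //; apply: step_inj.
Qed.

Lemma FE_same d e : in_face rot d e -> face_edges rot e = face_edges rot d.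
Proof.
move=> h; apply/setP => E; apply/imsetP/imsetP => -[x hx ->]; exists x => //.
  by move: hx; rewrite !inE (same_face h).
by move: hx; rewrite !inE (same_face h).
Qed.

Lemma FE_compat a d : compat a -> dart d ->
  [set a @: (E : {set V}) | E in face_edges rot d] = face_edges rot (amap a d).
Proof.
move=> ha hd; rewrite /face_edges -imset_comp.
apply/setP => E; apply/imsetP/imsetP => -[e he ->].
  have [k ek] := in_face_ex he.
  exists (amap a e); first by rewrite inE ek compat_iter //; apply: in_face_iter.
  by rewrite /= imsetU1 imset_set1.
have [k ek] := in_face_ex he.
exists (iter k (face_step rot) d); first by apply: in_face_iter.
by rewrite ek -compat_iter // /= imsetU1 imset_set1.
Qed.

Lemma compat_aut a : compat a -> map_aut rot a.
Proof.
move=> ha; split; first by case: ha.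
move=> d hd; exists (amap a d); last exact: FE_compat.
by case: ha => a1 _; rewrite /dart /amap a1.
Qed.

Lemma G_aut a : a \in G -> map_aut rot a.
Proof. by move=> /compatG /compat_aut. Qed.


Lemma sig1X k x : (sig1 ^+ k)%g (phi x) = phi (x + k%:R).
Proof.
rewrite permX; elim: k => [|k IH] /=; first by rewrite addr0.
by rewrite IH sig1E -natr1 addrA.
Qed.

Definition tau (b : R) : {perm V} := (sig1 ^+ (nat_of_ord b))%g.
Lemma tauE b x : tau b (phi x) = phi (x + b).
Proof. by rewrite /tau sig1X valK. Qed.
Lemma tauVE b x : (tau b)^-1%g (phi x) = phi (x - b).
Proof. by rewrite -{1}[x](subrK b) -(tauE b (x - b)) permK. Qed.

Lemma sig1G : sig1 \in G. Proof. by apply: mem_gen; rewrite !inE eqxx. Qed.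
Lemma sig2G : sig2 \in G. Proof. by apply: mem_gen; rewrite !inE eqxx orbT. Qed.
Lemma tauG b : tau b \in G. Proof. exact: groupX sig1G. Qed.

Lemma sig2sq x : (sig2 ^+ 2)%g (phi x) = phi ((1 + nR) * x).
Proof.
have hn := nn0; have hc := cn0; have h2 := esym c2; have hcc := cc0.
rewrite permX /= !sig2E; congr phi; ring: hn hc h2 hcc.
Qed.

Definition mu (k : R) : {perm V} := ((sig2 ^+ 2) ^+ (nat_of_ord k))%g.
Lemma muE k x : mu k (phi x) = phi ((1 + nR * k) * x).
Proof.
rewrite /mu permX -[k in RHS]valK; elim: (nat_of_ord k) => [|i IH] /=; first by rewrite mulr0 addr0 mul1r.
have hn := nn0.
by rewrite IH sig2sq -natr1; congr phi; ring: hn.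
Qed.
Lemma muG k : mu k \in G. Proof. by apply: groupX; apply: groupX sig2G. Qed.

Lemma sig2_0 : sig2 (phi 0) = phi 0.
Proof. by rewrite sig2E; congr phi; ring. Qed.

Lemma sig2_nb d : isnb d -> sig2 (phi d) = phi (rho d).
Proof.
have hn := nn0; have hc := cn0; have h2 := esym c2; have hcc := cc0.
move=> hd; rewrite sig2E; congr phi.
case: (nbP hd) => -[t -> p].
  by rewrite rho_pos //; ring: hn hc h2 hcc.
by rewrite rho_neg //; ring: hn hc h2 hcc.
Qed.

Lemma isnb_rho d : isnb d -> isnb (rho d).
Proof. by rewrite (isnbN (pi_rho _)). Qed.

Lemma sig2X_nb d k : isnb d -> (sig2 ^+ k)%g (phi d) = phi (iter k rho d).
Proof.
move=> hd; rewrite permX; elim: k => [|k IH] //=.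
rewrite IH sig2_nb //; elim: k {IH} => //= k IH; exact: isnb_rho.
Qed.

Definition d0 : V * V := (phi 0, phi (-1)).

Lemma isnb_m1 : isnb (-1). Proof. by rewrite /isnb piNeg pi1 eqxx orbT. Qed.
Lemma isnb_1 : isnb 1. Proof. by rewrite /isnb pi1 eqxx. Qed.
Lemma dart_d0 : dart d0. Proof. by rewrite /dart /d0 /= adjE subr0 isnb_m1. Qed.

Lemma d0_iter k : iter k (face_step rot) d0 = (phi (- k%:R), phi (- k%:R - 1)).
Proof.
have := face_iter 0 k isnb_m1; rewrite add0r => -> .
rewrite /F piNeg pi1 (negbTE Zn_N11); congr (phi _, phi _); ring.
Qed.

Lemma S0P E : E \in face_edges rot d0 <-> exists j, E = [set phi j; phi (j + 1)].
Proof.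
split.
  case/imsetP => e he ->; have [k ->] := in_face_ex he.
  rewrite d0_iter /=; exists (- k%:R - 1); rewrite setUC; congr [set _; phi _]; ring.
case=> j ->; apply/imsetP; exists (iter (nat_of_ord (- (j + 1))) (face_step rot) d0).
  exact: in_face_iter.
by rewrite d0_iter valK /= setUC; congr [set phi _; phi _]; ring.
Qed.

Lemma set2_cases (a b c d : V) : [set a; b] = [set c; d] -> a != b ->
  (a = c /\ b = d) \/ (a = d /\ b = c).
Proof.
move=> E nab.
have : a \in [set c; d] by rewrite -E set21.
have : b \in [set c; d] by rewrite -E set22.
rewrite !inE => /orP[] /eqP eb /orP[] /eqP ea.
- by move: nab; rewrite ea eb eqxx.
- by right.
- by left.
- by move: nab; rewrite ea eb eqxx.
Qed.

Lemma R_neq a b : (a < N)%N -> (b < N)%N -> a != b -> (a%:R : R) != b%:R.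
Proof. by move=> ha hb; apply: contra => /eqP /(natR_inj ha hb) ->. Qed.

Lemma R10 : (1 : R) != 0.
Proof. exact: (R_neq N_gt1 (ltnW N_gt1) (isT : 1%N != 0%N)). Qed.
Lemma R20 : (1 + 1 : R) != 0.
Proof.
have h : (2 < N)%N by have := n3N; have := n_ge3; lia.
exact: (R_neq h (ltnW N_gt1) (isT : 2%N != 0%N)).
Qed.

Lemma imset2 (h : {perm V}) a b : h @: [set a; b] = [set h a; h b].
Proof. by rewrite imsetU1 imset_set1. Qed.

Lemma dihedral (h : {perm V}) :
  (forall j, h @: [set phi j; phi (j + 1)] \in face_edges rot d0) ->
  exists b : R, (forall x, h (phi x) = phi (b + x)) \/ (forall x, h (phi x) = phi (b - x)).
Proof.
move=> hS; pose H x := psi (h (phi x)).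
have hH x : h (phi x) = phi (H x) by rewrite /H phiK.
have Hinj : injective H by move=> x y /psi_inj /perm_inj /phiI.
have D j : H (j + 1) - H j = 1 \/ H (j + 1) - H j = -1.
  have [i ei] := (S0P _).1 (hS j).
  move: ei; rewrite imset2 !hH => ei.
  have nab : phi (H j) != phi (H (j + 1)).
    apply/negP => /eqP /phiI /Hinj e.
    by move: R10; rewrite -[1](addKr j) -e addNr eqxx.
  by case: (set2_cases ei nab) => -[/phiI -> /phiI ->]; [left|right]; ring.
have Dc j : H (j + 1 + 1) - H (j + 1) = H (j + 1) - H j.
  have Hne : H (j + 1 + 1) != H j.
    apply/negP => /eqP /Hinj e.
    have : (1 + 1 : R) = 0 by rewrite -[1 + 1](addKr j) [j + (1 + 1)]addrA e addNr.
    by move/eqP; rewrite (negbTE R20).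
  case: (D j) => e1; case: (D (j + 1)) => e2; rewrite e1 e2 //; exfalso; apply: (negP Hne);
    move/eqP: e1; rewrite subr_eq => /eqP e1; move/eqP: e2; rewrite subr_eq => /eqP e2;
    by apply/eqP; rewrite e2 e1; ring.
have Dall k : H ((k%:R : R) + 1) - H k%:R = H 1 - H 0.
  elim: k => [|k IH]; first by rewrite add0r.
  by rewrite -natr1 Dc IH.
have Hk k : H (k%:R) = H 0 + k%:R * (H 1 - H 0).
  elim: k => [|k IH]; first by rewrite mul0r addr0.
  by rewrite -natr1 -[H (_ + 1)](subrK (H k%:R)) Dall IH; ring.
exists (H 0); have := D 0; rewrite add0r => -[e|e]; [left|right] => x;
  by rewrite hH -[x]valK Hk e; congr phi; ring.
Qed.


Lemma solve_var (T : zmodType) (a e L R' : T) : L = R' -> L - R' = a - e -> a = e.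
Proof. by move=> -> /eqP; rewrite subrr eq_sym subr_eq0 => /eqP. Qed.
Lemma solve_varN (T : zmodType) (a e L R' : T) : L = R' -> L - R' = e - a -> a = e.
Proof. by move=> -> /eqP; rewrite subrr eq_sym subr_eq0 => /eqP. Qed.
Lemma solve2N (T : zmodType) (a e L R' L2 R2 : T) : L = R' -> L2 = R2 -> (L - R') - (L2 - R2) = e - a -> a = e.
Proof. by move=> -> ->; rewrite !subrr => /eqP; rewrite eq_sym subr_eq0 => /eqP. Qed.

Lemma Nm1 : ((N.-1)%:R : R) = -1.
Proof.
apply/eqP; rewrite -subr_eq0 opprK natr1 prednK ?natR0 //.
exact: ltnW N_gt1.
Qed.

Lemma n_ltN : (n < N)%N. Proof. by have := n3N; have := n_ge3; lia. Qed.
Lemma nR0 : nR != 0.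
Proof. rewrite nRE; apply: (@R_neq n 0 n_ltN (ltnW N_gt1)); have := n_ge3; lia. Qed.
Lemma nR1 : nR != 1.
Proof. rewrite nRE; apply: (@R_neq n 1 n_ltN N_gt1); have := n_ge3; lia. Qed.
Lemma nR2 : nR != 1 + 1.
Proof.
rewrite nRE (_ : 1 + 1 = 2%:R) //; apply: (@R_neq n 2 n_ltN).
  by have := n3N; have := n_ge3; lia.
by have := n_ge3; lia.
Qed.
Lemma nRR : nR + nR != 0.
Proof.
rewrite nRE -natrD; apply: (@R_neq (n + n) 0); last by have := n_ge3; lia.
  by have := n3N; have := n_ge3; lia.
exact: ltnW N_gt1.
Qed.

Lemma edge_iter (u d : R) (E : {set V}) : isnb d -> E \in face_edges rot (phi u, phi (u + d)) ->
  exists a, E = [set phi (F u d a); phi (F u d (a + 1))].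
Proof.
move=> hd /imsetP [e he ->]; have [k ->] := in_face_ex he.
by rewrite face_iter //; exists k%:R.
Qed.

Lemma no_neg (h : {perm V}) (b : R) (d'' : V * V) : (forall x, h (phi x) = phi (b - x)) ->
  [set h @: (E : {set V}) | E in face_edges rot (phi 0, phi 1)] = face_edges rot d'' -> False.
Proof.
move=> hh eS; have h2 := esym c2.
have pc : forall y z, pi (cR * y * z) = 0 by move=> ? ?; rewrite -mulrA picM.
have e1 : [set phi b; phi (b - 1)] \in face_edges rot d''.
  rewrite -eS; apply/imsetP; exists [set phi 0; phi 1].
    by apply/imsetP; exists (phi 0, phi 1) => //; rewrite inE; exact: connect0.
  by rewrite imset2 !hh subr0.
have e2 : [set phi (b + 1 - nR); phi b] \in face_edges rot d''.
  rewrite -eS; apply/imsetP; exists [set phi (-1 + nR); phi 0].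
    apply/imsetP; exists (iter N.-1 (face_step rot) (phi 0, phi 1)); first exact: in_face_iter.
    have := face_iter 0 N.-1 isnb_1; rewrite add0r => ->.
    rewrite Nm1 /F pi1 eqxx /=; congr [set phi _; phi _]; ring: h2.
  by rewrite imset2 !hh; congr [set phi _; phi _]; ring.
case/imsetP: e1 => e he E1.
have nb : phi b != phi (b - 1).
  apply/negP => /eqP /phiI e0; move: R10.
  by have -> : (1 : R) = 0 by apply: (solve_var e0); ring.
have nb2 : phi (b + 1 - nR) != phi b.
  apply/negP => /eqP /phiI e0; move: nR1.
  by have -> : nR = 1 by apply: (solve_varN e0); ring.
rewrite -(FE_same he) in e2.
case: (set2_cases E1 nb) => -[ea eb].
- move: e2; rewrite (surjective_pairing e) -ea -eb => /(edge_iter isnb_m1) [a].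
  rewrite /F piNeg pi1 (negbTE Zn_N11) !addr0 => /set2_cases -/(_ nb2) [[]|[]] /phiI Ea /phiI Eb.
    have aa : a = -1 by apply: (solve_var Eb); ring.
    move: nR0; have -> : nR = 0 by apply: (solve_varN Ea); rewrite aa; ring.
    by rewrite eqxx.
  have aa : a = 0 by apply: (solve_var Eb); ring.
  move: nR2; have -> : nR = 1 + 1 by apply: (solve_varN Ea); rewrite aa; ring.
  by rewrite eqxx.
- have eB : e = (phi (b - 1), phi (b - 1 + 1)) by rewrite subrK (surjective_pairing e) ea eb.
  move: e2; rewrite eB => /(edge_iter isnb_1) [a].
  rewrite /F pi1 eqxx => /set2_cases -/(_ nb2) [[]|[]] /phiI Ea /phiI Eb.
    have pEa := congr1 pi Ea; have pEb := congr1 pi Eb.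
    rewrite !(piD, piB, piNeg, pi1, pin, pinM, pc, mulr1, addr0) in pEa pEb.
    have pa : pi a = 0 by apply: (solve_varN pEb); ring.
    rewrite pa in pEa.
    have : (1 : 'Z_n) = -1 by apply: (solve_var pEa); ring.
    by move/eqP; rewrite (negbTE Zn_1N1).
  have pEb := congr1 pi Eb.
  rewrite !(piD, piB, piNeg, pi1, pin, pinM, pc, mulr1, addr0) in pEb.
  have pa : pi a = 1 by apply: (solve_varN pEb); ring.
  have [t ht] : exists t, a - 1 = nR * t by apply: piker; rewrite piB pa pi1 subrr.
  have at1 : a = 1 + nR * t by rewrite -ht addrC subrK.
  rewrite at1 in Ea Eb; have hcc := cc0.
  move: nRR; have -> : nR + nR = 0 by apply: (solve2N Ea Eb); ring: h2 hcc.
  by rewrite eqxx.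
Qed.


Lemma dart_trans (d' : V * V) : dart d' -> exists2 g, g \in G & amap g d0 = d'.
Proof.
have hn := nn0; have hc := cn0; have h2 := esym c2; have hcc := cc0.
move=> hd; have [u [dd [hdd ->]]] := dart_form hd.
case: (nbP hdd) => -[t -> p].
  exists (sig2 * mu (t - 1) * tau u)%g.
    by rewrite !groupM ?sig2G ?muG ?tauG.
  rewrite /amap /d0 /= !permM sig2_0 sig2E !muE !tauE.
  by congr (phi _, phi _); ring: h2 hcc.
exists (mu (- t) * tau u)%g; first by rewrite !groupM ?muG ?tauG.
rewrite /amap /d0 /= !permM !muE !tauE.
by congr (phi _, phi _); ring: hn.
Qed.

Lemma himgM (a b : {perm V}) (X : {set V}) : (a * b)%g @: X = b @: (a @: X).
Proof. by rewrite -imset_comp; apply: eq_imset => x; rewrite /= permM. Qed.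

Lemma aut_G a : map_aut rot a -> a \in G.
Proof.
case=> a1 a2.
have [d' hd' eS] := a2 _ dart_d0.
have [g gG gd] := dart_trans hd'.
have gc := compatG gG; have giG : (g^-1)%g \in G by rewrite groupV.
have gic := compatG giG.
pose h := (a * g^-1)%g.
have hS : forall j, h @: [set phi j; phi (j + 1)] \in face_edges rot d0.
  move=> j; have E0 : [set phi j; phi (j + 1)] \in face_edges rot d0 by apply/S0P; exists j.
  have : a @: [set phi j; phi (j + 1)] \in face_edges rot d' by rewrite -eS; apply: imset_f.
  rewrite -gd -FE_compat //; last exact: dart_d0.
  case/imsetP => E' hE' eE'.
  rewrite /h himgM eE' -himgM mulgV.
  have -> : (1%g : {perm V}) @: E' = E'.
    apply/setP => x; apply/imsetP/idP => [[y hy ->]|hx]; first by rewrite perm1.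
    by exists x; rewrite ?perm1.
  exact: hE'.
have [b [hb|hb]] := dihedral hS.
  have eh : h = tau b.
    by apply/permP => v; have [x ->] := phi_surj v; rewrite hb tauE addrC.
  have -> : a = (h * g)%g by rewrite /h -mulgA mulVg mulg1.
  by rewrite eh groupM ?tauG.
exfalso.
have hd1 : dart (phi 0, phi 1) by rewrite /dart /= adjE subr0 isnb_1.
have [d1 hd1' e1] := a2 _ hd1.
apply: (no_neg hb (d'' := amap (g^-1)%g d1)).
rewrite -FE_compat // -e1; apply/setP => X; apply/imsetP/imsetP.
  case=> E hE ->; exists (a @: E); first exact: imset_f.
  by rewrite himgM.
case=> Y /imsetP [E hE ->] ->; exists E => //.
by rewrite himgM.
Qed.

Lemma face_rot a d : compat a -> dart d -> amap a d = face_step rot d ->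
  face_stab rot d a /\ (forall p q, p \in face_verts rot d -> q \in face_verts rot d ->
    exists k, (a ^+ k)%g p = q).
Proof.
move=> ha hd had.
have act e : in_face rot d e -> amap a e = face_step rot e.
  by case/in_face_ex => k ->; rewrite compat_iter // had -iterSr iterS.
have actk k e : in_face rot d e -> amap (a ^+ k)%g e = iter k (face_step rot) e.
  elim: k e => [|k IH] e he; first by rewrite expg0 /amap !perm1; case: e he.
  have -> : amap (a ^+ k.+1)%g e = amap a (amap (a ^+ k)%g e) by rewrite expgSr /amap !permM.
  rewrite IH // act //=; exact: connect_trans he (in_face_iter _ _).
split.
  rewrite /face_stab FE_compat // had; apply: FE_same; exact: fconnect1.
move=> p q /imsetP [e he ->] /imsetP [e' he' ->].
have : in_face rot e e' by move: he he'; rewrite !inE => he he'; rewrite (same_face he).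
case/in_face_ex => k ek; exists k.
move: he; rewrite inE => he.
by have := congr1 fst (actk k e he); rewrite /= -ek.
Qed.

Lemma rotary_rot : rotary rot.
Proof.
have hn := nn0; have hc := cn0; have h2 := esym c2; have hcc := cc0.
split.
  move=> v; have [u ->] := phi_surj v; exists (sig2 ^ tau u)%g; split.
  - by apply: G_aut; apply: groupJ; [exact: sig2G | exact: tauG].
  - by rewrite conjgE !permM tauVE subrr sig2_0 tauE add0r.
  - move=> w w'; have [y ->] := phi_surj w; have [z ->] := phi_surj w'.
    rewrite !adjE => hy hz; have [k hk] := rho_trans hy hz; exists k.
    by rewrite -conjXg conjgE !permM tauVE sig2X_nb // hk tauE; congr phi; ring.
move=> d hd; have [u [dd [hdd ed]]] := dart_form hd; rewrite ed in hd *.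
have st : face_step rot (phi u, phi (u + dd)) = (phi (F u dd 1), phi (F u dd (1 + 1))).
  by have := face_iter u 1 hdd; rewrite /= -[1%:R]/1 => ->.
case: (nbP hdd) => -[t edd p].
  pose a := (sig2 ^+ 2 * tau (dd - nR * u))%g.
  have aG : a \in G by rewrite groupM ?tauG ?groupX ?sig2G.
  have hact : amap a (phi u, phi (u + dd)) = face_step rot (phi u, phi (u + dd)).
    rewrite st /amap /a /= !permM ?sig2sq ?sig2E !tauE /F p eqxx edd.
    by congr (phi _, phi _); ring: h2 hcc.
  have [fs tr] := face_rot (compatG aG) hd hact.
  by exists a; split => //; exact: G_aut.
pose a := tau dd.
have hact : amap a (phi u, phi (u + dd)) = face_step rot (phi u, phi (u + dd)).
  rewrite st /amap /a /= !tauE /F p (negbTE Zn_N11).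
  by congr (phi _, phi _); ring.
have [fs tr] := face_rot (compatG (tauG dd)) hd hact.
by exists a; split => //; apply: G_aut; exact: tauG.
Qed.

Lemma not_reflexible : ~ reflexible rot.
Proof.
case=> _ /(_ _ dart_d0) [a [[a1 a2] fs rev]].
have hS : forall j, a @: [set phi j; phi (j + 1)] \in face_edges rot d0.
  move=> j; rewrite -fs; apply: imset_f; apply/S0P; by exists j.
have [b [hb|hb]] := dihedral hS.
  have := rev d0 (connect0 _ _); rewrite /d0 /= !hb => /dclass_face.
  rewrite /dclass /= !psiK.
  have -> : b + 0 - (b + -1) = 1 by ring.
  rewrite subr0 piNeg pi1 => /eqP; by rewrite (negbTE Zn_1N1).
have hd1 : dart (phi 0, phi 1) by rewrite /dart /= adjE subr0 isnb_1.
have [d1 _ e1] := a2 _ hd1.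
exact: no_neg hb e1.
Qed.

Lemma dist_gen : distinguished rot (phi 0) (phi (-1)) d0 sig1 sig2.
Proof.
have hn := nn0; have hc := cn0; have h2 := esym c2; have hcc := cc0.
split.
- by rewrite adjE subr0 isnb_m1.
- by left.
- split.
  + exact: G_aut sig1G.
  + rewrite /face_stab FE_compat ?dart_d0 //; last exact: compatG sig1G.
    apply: FE_same.
    have -> : amap sig1 d0 = iter N.-1 (face_step rot) d0.
      by rewrite d0_iter Nm1 /amap /d0 /= !sig1E; congr (phi _, phi _); ring.
    exact: in_face_iter.
  + right => e /in_face_ex [k ->]; rewrite d0_iter /= sig1E; congr phi; ring.
- split.
  + exact: G_aut sig2G.
  + exact: sig2_0.
  + left => w; have [y ->] := phi_surj w; rewrite adjE subr0 => hy.
    by rewrite rotE subr0 add0r sig2_nb.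
- split.
  + apply/permP => v; have [x ->] := phi_surj v.
    rewrite expgS expg1 perm1 !permM !sig1E !sig2E sig1E sig2E; congr phi; ring: h2 hcc.
  + apply/eqP => e; have := congr1 (fun p : {perm V} => p (phi 0)) e.
    rewrite /= perm1 permM sig1E sig2E => /phiI.
    have -> : - (0 + 1) + cR * (0 + 1) * (0 + 1 - 1) = -1 by ring.
    move/eqP; rewrite eqr_oppLR oppr0 => /eqP e1; move: R10; by rewrite e1 eqxx.
  + by rewrite permM sig1E sig2E; congr phi; ring.
  + by rewrite permM sig1E sig2E; congr phi; ring.
Qed.

Lemma main_inside : exists rot : V -> V -> V,
    is_rotation rot /\ polytopal rot /\ chiral rot /\
    map_type rot (m * (s * m)) (2 * m) /\
    (forall a, map_aut rot a <->
       a \in <<[set sigma1 (s * m) m; sigma2 (s * m) m]>>%g) /\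
    (exists v w fd t1 t2,
       distinguished rot v w fd t1 t2 /\
       <<[set t1; t2]>>%g = <<[set sigma1 (s * m) m; sigma2 (s * m) m]>>%g).
Proof.
exists rot; split; first exact: is_rot.
split; first exact: polytopal_rot.
split; first by split; [exact: rotary_rot | exact: not_reflexible].
split; first exact: map_type_rot.
split; first by move=> a; split; [exact: aut_G | exact: G_aut].
by exists (phi 0), (phi (-1)), d0, sig1, sig2; split; [exact: dist_gen | ].
Qed.

  End Main.

Theorem proposition4p2 (m s : nat) :
  odd m -> (3 <= m)%N -> (0 < s)%N ->
  exists rot : vtx (s * m) m -> vtx (s * m) m -> vtx (s * m) m,
    is_rotation rot /\ polytopal rot /\ chiral rot /\
    map_type rot (m * (s * m)) (2 * m) /\
    (forall a, map_aut rot a <->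
       a \in <<[set sigma1 (s * m) m; sigma2 (s * m) m]>>%g) /\
    (exists v w fd t1 t2,
       distinguished rot v w fd t1 t2 /\
       <<[set t1; t2]>>%g = <<[set sigma1 (s * m) m; sigma2 (s * m) m]>>%g).
Proof. by move=> H1 H2 H3; apply: main_inside. Qed.
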